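(* Let $A$ be a store with sequence number $s_A$ performed by thread $i$, represented by a node of an acyclic modification order graph $G$. Then $U_i(CV_A) = U_i(\perp_{CV_A}) = s_A$ holds throughout each execution that terminates, where $U_i$ denotes the $i$-th component of a clock vector.
   Context: An execution is a sequence of events performed by threads. Each event $E$ has a thread id $t_E$ and a unique sequence number $s_E$ taken from a global counter that is incremented by one at every event, so sequence numbers strictly increase along the execution. A clock vector is a function from thread ids to natural numbers, with $(CV_1 \cup CV_2)(t) = \max(CV_1(t), CV_2(t))$ and $CV_1 \le CV_2$ iff $CV_1(t) \le CV_2(t)$ for all $t$; $U_i(CV) = CV(i)$. The modification order graph (mo-graph) has one node for each atomic store or atomic read-modify-write (RMW) executed so far; edges only connect nodes accessing the same memory location, and mo edges are added to it during the execution according to the C/C++ modification-order (coherence) constraints, so that the modification order it represents is consistent with the sequenced-before order of each thread. Each node $X$ stores a thread id $X.tid$, a set $X.edges$ of successor nodes (its outgoing mo edges), a field $X.rmw$ (a node or null), and a clock vector $X.cv$, also written $CV_X$. When the node for a store $A$ is created, its clock vector is $\perp_{CV_A} = \lambda t.\ (s_A \text{ if } t = t_A \text{ else } 0)$. Edges are added only by the following procedures. Merge(dst, src): if $src.cv \le dst.cv$ return false; otherwise set $dst.cv := dst.cv \cup src.cv$ and return true. AddEdge(from, to): let mustAdd be true iff ($from.rmw = to$ or $from.tid = to.tid$). If $from.cv \le to.cv$ and not mustAdd, return. While $from.rmw \ne$ null: let $next := from.rmw$; if $next = to$ stop the loop; otherwise $from := next$. Add $to$ to $from.edges$. If Merge(to,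 from) returns true, then let $Q := \{to\}$ and while $Q$ is nonempty remove a node $node$ from $Q$ and for each $dst \in node.edges$, if Merge(dst, node) returns true add $dst$ to $Q$. AddRMWEdge(from, rmw): set $from.rmw := rmw$; for each $dst \in from.edges$ with $dst \ne rmw$ add $dst$ to $rmw.edges$; set $from.edges := \emptyset$; call AddEdge(from, rmw). *)

(* Defs.v *)
From mathcomp Require Import all_boot.
From Stdlib Require Import Relations.

Set Implicit Arguments.
Unset Strict Implicit.
Unset Printing Implicit Defensive.

(* Clock vectors: functions from thread ids to naturals. *)
Definition CV := nat -> nat.
Definition cv_le (c1 c2 : CV) : Prop := forall t, c1 t <= c2 t.
Definition cv_union (c1 c2 : CV) : CV := fun t => maxn (c1 t) (c2 t).

(* The initial clock vector of a store with sequence number s by thread i. *)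
Definition cv_bot (s i : nat) : CV := fun t => if t == i then s else 0.

(* A node is identified by the (unique) sequence number of its store.
   [nodes] lists the nodes created so far; the other fields give, for each
   node, its thread id, its outgoing mo edges (a duplicate-free list used as
   a finite set), its rmw field, and its clock vector. *)
Record mo_state := MoState {
  nodes  : seq nat;
  ntid   : nat -> nat;
  nedges : nat -> seq nat;
  nrmw   : nat -> option nat;
  ncv    : nat -> CV }.

Definition upd {A : Type} (f : nat -> A) (n : nat) (v : A) : nat -> A :=
  fun x => if x == n then v else f x.

Definition set_cv (st : mo_state) (n : nat) (c : CV) : mo_state :=
  MoState (nodes st) (ntid st) (nedges st) (nrmw st) (upd (ncv st) n c).
Definition set_edges (st : mo_state) (n : nat) (l : seq nat) : mo_state :=
  MoState (nodes st) (ntid st) (upd (nedges st) n l) (nrmw st) (ncv st).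
Definition set_rmw (st : mo_state) (n : nat) (r : option nat) : mo_state :=
  MoState (nodes st) (ntid st) (nedges st) (upd (nrmw st) n r) (ncv st).

Definition init_state : mo_state :=
  MoState [::] (fun _ => 0) (fun _ => [::]) (fun _ => None) (fun _ _ => 0).

Definition create_node (st : mo_state) (s t : nat) : mo_state :=
  MoState (rcons (nodes st) s) (upd (ntid st) s t) (upd (nedges st) s [::])
          (upd (nrmw st) s None) (upd (ncv st) s (cv_bot s t)).

(* Merge(dst, src): big-step relation; the boolean is the returned value. *)
Inductive merge (dst src : nat) : mo_state -> mo_state -> bool -> Prop :=
| merge_no st :
    cv_le (ncv st src) (ncv st dst) -> merge dst src st st false
| merge_yes st :
    ~ cv_le (ncv st src) (ncv st dst) ->
    merge dst src st (set_cv st dst (cv_union (ncv st dst) (ncv st src))) true.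

Definition add_q (x : nat) (Q : seq nat) : seq nat :=
  if x \in Q then Q else x :: Q.

(* "for each dst in node.edges, if Merge(dst, node) add dst to Q":
   iterate over a given enumeration l of node.edges. *)
Inductive iter_edges (node : nat) :
    seq nat -> seq nat -> mo_state -> seq nat -> mo_state -> Prop :=
| ie_nil Q st : iter_edges node [::] Q st Q st
| ie_cons dst l Q st st1 b Q2 st2 :
    merge dst node st st1 b ->
    iter_edges node l (if b then add_q dst Q else Q) st1 Q2 st2 ->
    iter_edges node (dst :: l) Q st Q2 st2.

(* "while Q is nonempty remove a node from Q and ...": any node may be
   removed, and node.edges may be enumerated in any order. *)
Inductive propagate : seq nat -> mo_state -> mo_state -> Prop :=
| prop_done st : propagate [::] st st
| prop_step Q node Q1 l st Q2 st1 st2 :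
    perm_eq Q (node :: Q1) ->
    perm_eq l (nedges st node) ->
    iter_edges node l Q1 st Q2 st1 ->
    propagate Q2 st1 st2 ->
    propagate Q st st2.

(* The rmw-chain loop of AddEdge: rmw_walk to st from from' means the loop
   started at [from] terminates with [from'] (no derivation if it diverges). *)
Inductive rmw_walk (to : nat) (st : mo_state) : nat -> nat -> Prop :=
| rw_stop f : (nrmw st f = None \/ nrmw st f = Some to) -> rmw_walk to st f f
| rw_next f n f' : nrmw st f = Some n -> n <> to -> rmw_walk to st n f' ->
    rmw_walk to st f f'.

Definition add_succ (st : mo_state) (f to : nat) : mo_state :=
  set_edges st f (if to \in nedges st f then nedges st f
                  else rcons (nedges st f) to).

Definition must_add (st : mo_state) (from to : nat) : Prop :=
  nrmw st from = Some to \/ ntid st from = ntid st to.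

Inductive add_edge (from to : nat) : mo_state -> mo_state -> Prop :=
| ae_skip st :
    cv_le (ncv st from) (ncv st to) -> ~ must_add st from to ->
    add_edge from to st st
| ae_add st f' st2 b st3 :
    (~ cv_le (ncv st from) (ncv st to) \/ must_add st from to) ->
    rmw_walk to st from f' ->
    merge to f' (add_succ st f' to) st2 b ->
    (if b then propagate [:: to] st2 st3 else st3 = st2) ->
    add_edge from to st st3.

Definition rmw_prep (st : mo_state) (from rmw : nat) : mo_state :=
  let st1 := set_rmw st from (Some rmw) in
  let st2 := set_edges st1 rmw
     (nedges st1 rmw ++
      [seq d <- nedges st1 from | (d != rmw) && (d \notin nedges st1 rmw)]) in
  set_edges st2 from [::].

Inductive add_rmw_edge (from rmw : nat) : mo_state -> mo_state -> Prop :=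
| are st st' : add_edge from rmw (rmw_prep st from rmw) st' ->
    add_rmw_edge from rmw st st'.

Inductive mo_step : mo_state -> mo_state -> Prop :=
| step_create st s t :
    (forall n, n \in nodes st -> n < s) ->
    mo_step st (create_node st s t)
| step_edge st st' f t :
    f \in nodes st -> t \in nodes st -> add_edge f t st st' -> mo_step st st'
| step_rmw st st' f r :
    f \in nodes st -> r \in nodes st -> add_rmw_edge f r st st' ->
    mo_step st st'.

(* A (finite, hence terminating) execution, as the list of successive
   states, most recent first. *)
Inductive run : list mo_state -> Prop :=
| run0 : run [:: init_state]
| runS st st' tr : run (st :: tr) -> mo_step st st' -> run (st' :: st :: tr).

Definition mo_edge (st : mo_state) (x y : nat) : Prop :=
  x \in nodes st /\ y \in nodes st /\ y \in nedges st x.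

Definition acyclic (st : mo_state) : Prop :=
  forall x, ~ clos_trans nat (mo_edge st) x x.

(* The modification order represented by the graph (reachability) is
   consistent with sequenced-before: a later store of a thread is never
   mo-before an earlier store of the same thread. *)
Definition sb_consistent (st : mo_state) : Prop :=
  forall x y, x \in nodes st -> y \in nodes st -> ntid st x = ntid st y ->
    x < y -> ~ clos_trans nat (mo_edge st) y x.

(* Main.v *)
Require Import Defs.
From mathcomp Require Import all_boot.
From Stdlib Require Import Relations List.
Set Implicit Arguments.
Unset Strict Implicit.

Definition rtc st := clos_refl_trans nat (mo_edge st).

Definition Inv st :=
 (forall x y, y \in nedges st x -> x \in nodes st /\ y \in nodes st) /\
 (forall x r, nrmw st x = Some r -> x \in nodes st /\ r \in nodes st) /\
 (forall X, X \in nodes st -> X <= ncv st X (ntid st X)) /\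
 (forall X t, X \in nodes st -> ncv st X t = 0 \/
    (ncv st X t \in nodes st /\ ntid st (ncv st X t) = t /\
     rtc st (ncv st X t) X)).

Definition same_shape st st' :=
  nodes st' = nodes st /\ nedges st' = nedges st /\ ntid st' = ntid st /\
  nrmw st' = nrmw st.

Lemma rtc_mono (R S : nat -> nat -> Prop) x y :
  (forall a b, R a b -> clos_refl_trans nat S a b) ->
  clos_refl_trans nat R x y -> clos_refl_trans nat S x y.
Proof.
move=> H; elim=> [a b /H //|a|a b c _ h1 _ h2]; first exact: rt_refl.
exact: rt_trans h1 h2.
Qed.

Lemma merge_shape dst src st st1 b :
  Defs.merge dst src st st1 b -> same_shape st st1.
Proof. by case. Qed.

Lemma merge_inv st st1 dst src b :
  Inv st -> dst \in nedges st src -> Defs.merge dst src st st1 b -> Inv st1.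
Proof.
move=> H Hd Hm; case: Hm H Hd => [st0 _ H _ //| st0 Hn [K1 [K2 [J I]]] Hd].
have [Hs Hdn] := K1 _ _ Hd.
rewrite /Inv /rtc /=; split; first exact K1; split; first exact K2; split.
  move=> X HX; rewrite /upd; case: (X =P dst) => [->|_]; last exact: J.
  by rewrite /cv_union; apply: leq_trans (J _ Hdn) (leq_maxl _ _).
move=> X t HX; rewrite /upd; case: (X =P dst) => [->|_]; last exact: I.
rewrite /cv_union; case: (leqP (ncv st0 dst t) (ncv st0 src t)) => h.
  case: (I src t Hs) => [->|[a [b0 c]]]; first by left.
  right; do !split => //; apply: (@rt_trans _ (mo_edge st0) _ src); first exact: c.
  by apply: rt_step; split; [|split].
exact: I.
Qed.

Lemma iter_inv node l Q st Q2 st2 :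
  iter_edges node l Q st Q2 st2 -> Inv st -> {subset l <= nedges st node} ->
  Inv st2 /\ same_shape st st2.
Proof.
elim=> [Q0 st0 H _|dst l0 Q0 st0 st1 b Q3 st3 Hm _ IH H Hs].
  by split => //.
have [e1 [e2 [e3 e4]]] := merge_shape Hm.
have H1 := merge_inv H (Hs _ (mem_head _ _)) Hm.
have [H3 [f1 [f2 [f3 f4]]]] := IH H1 (fun x hx => ltac:(by rewrite e2; apply: Hs; rewrite seq.in_cons hx orbT)).
split => //; rewrite /same_shape f1 f2 f3 f4 e1 e2 e3 e4 //.
Qed.

Lemma prop_inv Q st st2 : propagate Q st st2 -> Inv st -> Inv st2 /\ same_shape st st2.
Proof.
elim=> [st0 H|Q0 node Q1 l st0 Q2 st1 st3 _ Hl Hi _ IH H].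
  by split.
have [H1 [e1 [e2 [e3 e4]]]] := iter_inv Hi H (fun x hx => ltac:(by rewrite -(perm_mem Hl))).
have [H3 [f1 [f2 [f3 f4]]]] := IH H1.
split => //; rewrite /same_shape f1 f2 f3 f4 e1 e2 e3 e4 //.
Qed.

Lemma walk_nodes to st f f' : rmw_walk to st f f' -> f \in nodes st ->
  (forall x r, nrmw st x = Some r -> x \in nodes st /\ r \in nodes st) ->
  f' \in nodes st.
Proof.
elim=> [//|a n a' e _ _ IH] Ha K2; apply: IH (K2 _ _ e).2 K2.
Qed.

Lemma add_succ_in st f to : to \in nedges (add_succ st f to) f.
Proof.
rewrite /add_succ /= /upd eqxx; case: ifP => // _; by rewrite mem_rcons mem_head.
Qed.

Lemma add_edge_inv from to st st' :
  add_edge from to st st' ->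
  (cv_le (ncv st from) (ncv st to) -> ~ must_add st from to -> Inv st) ->
  (forall f', rmw_walk to st from f' -> Inv (add_succ st f' to)) ->
  Inv st'.
Proof.
case=> [st0 a b H _|st0 f' st2 b st3 _ Hw Hm Hp _ H2]; first exact: H a b.
have I2 := H2 f' Hw.
have I3 := merge_inv I2 (add_succ_in _ _ _) Hm.
case: b Hm Hp => Hm Hp; last by rewrite Hp.
exact: (prop_inv Hp I3).1.
Qed.

Lemma iter_shape node l Q st Q2 st2 :
  iter_edges node l Q st Q2 st2 -> same_shape st st2.
Proof.
elim=> [//|dst l0 Q0 st0 st1 b Q3 st3 Hm _ [f1 [f2 [f3 f4]]]].
have [e1 [e2 [e3 e4]]] := merge_shape Hm.
rewrite /same_shape f1 f2 f3 f4 e1 e2 e3 e4 //.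
Qed.

Lemma prop_shape Q st st2 : propagate Q st st2 -> same_shape st st2.
Proof.
elim=> [//|Q0 node Q1 l st0 Q2 st1 st3 _ _ Hi _ [f1 [f2 [f3 f4]]]].
have [e1 [e2 [e3 e4]]] := iter_shape Hi.
rewrite /same_shape f1 f2 f3 f4 e1 e2 e3 e4 //.
Qed.

Lemma add_edge_shape from to st st' :
  add_edge from to st st' -> must_add st from to ->
  exists f', rmw_walk to st from f' /\ to \in nedges st' f' /\ nodes st' = nodes st.
Proof.
case=> [st0 a b nm //|st0 f' st2 b st3 _ Hw Hm Hp] hm.
exists f'; split => //.
have [e1 [e2 _]] := merge_shape Hm.
have [g1 g2] : nodes st3 = nodes st2 /\ nedges st3 = nedges st2.
  case: b Hm Hp => Hm Hp; last by rewrite Hp.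
  by have [f1 [f2 _]] := prop_shape Hp.
by rewrite g1 g2 e1 e2 add_succ_in.
Qed.

Lemma inv_transfer st st' :
  nodes st' = nodes st -> ntid st' = ntid st -> ncv st' = ncv st ->
  (forall x y, y \in nedges st' x -> x \in nodes st' /\ y \in nodes st') ->
  (forall x r, nrmw st' x = Some r -> x \in nodes st' /\ r \in nodes st') ->
  (forall x y, mo_edge st x y -> rtc st' x y) ->
  Inv st -> Inv st'.
Proof.
move=> e1 e2 e3 K1 K2 He [_ [_ [J I]]].
split => //; split => //; rewrite /Inv e1 e2 e3; split => //.
move=> X t HX; case: (I X t HX) => [->|[a [b c]]]; first by left.
by right; do !split => //; apply: rtc_mono He c.
Qed.

Lemma add_succ_inv st f to : Inv st -> f \in nodes st -> to \in nodes st ->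
  Inv (add_succ st f to).
Proof.
move=> H Hf Ht; have [K1 [K2 _]] := H.
apply: (inv_transfer _ _ _ _ _ _ H) => //=.
- move=> x y; rewrite /upd; case: (x =P f) => [->|_]; last exact: K1.
  case: ifP => _; first exact: K1.
  rewrite mem_rcons seq.in_cons; case/orP => [/eqP -> //|]; exact: K1.
- move=> x y [hx [hy he]]; apply: rt_step; split => //; split => //=.
  rewrite /upd; case: eqP => [e|//]; subst x.
  by case: ifP => _; rewrite ?mem_rcons ?seq.in_cons ?he ?orbT.
Qed.

Lemma create_inv st s t : (forall n, n \in nodes st -> n < s) -> Inv st ->
  Inv (create_node st s t).
Proof.
move=> Hs [K1 [K2 [J I]]].
have Hns : s \notin nodes st by apply/negP => /Hs; rewrite ltnn.
rewrite /Inv /create_node /=; split; last split; last split.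
- move=> x y; rewrite /upd; case: (x =P s) => [_ //|_] /K1 [a b].
  by rewrite !mem_rcons !seq.in_cons a b !orbT.
- move=> x r; rewrite /upd; case: (x =P s) => [_ //|_] /K2 [a b].
  by rewrite !mem_rcons !seq.in_cons a b !orbT.
- move=> X; rewrite mem_rcons seq.in_cons /upd; case: (X =P s) => [->|hx] /=.
    by rewrite /cv_bot !eqxx.
  exact: J.
- move=> X t0; rewrite mem_rcons seq.in_cons /upd; case: (X =P s) => [->|hx] /= HX.
    rewrite /cv_bot; case: (t0 =P t) => [->|_]; last by left.
    right; rewrite eqxx mem_rcons mem_head; split => //; split => //.
    exact: rt_refl.
  case: (I X t0 HX) => [->|[a [b c]]]; first by left.
  have ha : (ncv st X t0 == s) = false.
    by apply/negP => /eqP e; rewrite -e a in Hns.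
  right; rewrite ha mem_rcons seq.in_cons a orbT; split => //; split => //.
  apply: rtc_mono c => x y [hx' [hy he]]; apply: rt_step.
  split; first by rewrite mem_rcons seq.in_cons hx' orbT.
  split; first by rewrite mem_rcons seq.in_cons hy orbT.
  rewrite /= /upd; case: (x =P s) => [e|//]; by rewrite -e hx' in Hns.
Qed.

Definition Lrm st f r := nedges st r ++
  [seq d <- nedges st f | (d != r) && (d \notin nedges st r)].

Lemma prep_edges st f r x : f != r ->
  nedges (add_succ (rmw_prep st f r) f r) x =
  if x == f then [:: r] else if x == r then Lrm st f r else nedges st x.
Proof.
move=> hfr; rewrite /add_succ /rmw_prep /= /upd eqxx /=.
by case: (x =P f).
Qed.

Lemma prep_rmw st f r x :
  nrmw (add_succ (rmw_prep st f r) f r) x = if x == f then Some r else nrmw st x.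
Proof. by []. Qed.

Lemma rmw_inv st f r : Inv st -> f \in nodes st -> r \in nodes st -> f != r ->
  Inv (add_succ (rmw_prep st f r) f r).
Proof.
move=> H Hf Hr hfr; have [K1 [K2 _]] := H.
apply: (inv_transfer _ _ _ _ _ _ H) => //.
- move=> x y; rewrite prep_edges //; case: (x =P f) => [->|_].
    by rewrite seq.in_cons orbF => /eqP ->.
  case: (x =P r) => [->|_]; last exact: K1.
  rewrite /Lrm mem_cat mem_filter; case/orP => [/K1 //|/andP [_ /K1 [_ ->]]].
  by [].
- move=> x y; rewrite prep_rmw; case: (x =P f) => [-> [<-]|_] //; exact: K2.
- have hrf : (r == f) = false by apply/negbTE; rewrite eq_sym.
  move=> x y [hx [hy he]].
  have E1 : mo_edge (add_succ (rmw_prep st f r) f r) f r.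
    by split => //; split => //; rewrite prep_edges // eqxx mem_head.
  case: (x =P f) => [ex|nx].
    subst x; case: (y =P r) => [->|ny]; first exact: rt_step.
    apply: (@rt_trans _ _ _ r); first exact: rt_step.
    apply: rt_step; split => //; split => //.
    rewrite prep_edges // hrf eqxx /Lrm mem_cat mem_filter he andbT.
    by case: (y \in nedges st r) => //=; rewrite andbT; apply/eqP.
  apply: rt_step; split => //; split => //.
  rewrite prep_edges //; move/eqP/negbTE: nx => ->.
  case: (x =P r) => [ex|//]; subst x.
  by rewrite /Lrm mem_cat he.
Qed.

Lemma walk_prep st f r f' : rmw_walk r (rmw_prep st f r) f f' -> f' = f.
Proof.
move=> Hw; inversion Hw as [|a n a' e hn]; first by [].
move: e; rewrite /rmw_prep /= /upd eqxx => -[en]; by rewrite en in hn.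
Qed.

Lemma step_inv st st' : mo_step st st' -> Inv st -> acyclic st' -> Inv st'.
Proof.
case=> [st0 s t Hs H _|st0 st1 f t Hf Ht Ha H _|st0 st1 f r Hf Hr Ha H Hac].
- exact: create_inv.
- apply: (add_edge_inv Ha) => [_ _ //|f' Hw].
  have [K1 [K2 _]] := H.
  exact: add_succ_inv H (walk_nodes Hw Hf K2) Ht.
- inversion Ha as [st2 st3 Ha0]; subst; move: Ha0 => {Ha} Ha.
  have hm : must_add (rmw_prep st0 f r) f r.
    by left; rewrite /rmw_prep /= /upd eqxx.
  have [f' [Hw [Hin Hn]]] := add_edge_shape Ha hm.
  have ef := walk_prep Hw; subst f'.
  have hfr : f != r.
    apply/eqP => e; subst r; apply: (Hac f); apply: t_step.
    by rewrite /mo_edge Hn.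
  apply: (add_edge_inv Ha) => [_ /(_ hm) //|f' Hw'].
  rewrite (walk_prep Hw'); exact: rmw_inv.
Qed.

Lemma run_inv tr : run tr ->
  (forall st, List.In st tr -> acyclic st /\ sb_consistent st) ->
  forall st, List.In st tr -> Inv st.
Proof.
elim=> [_ st [<-|//]|st st' tr0 _ IH Hst Hall st0].
  by split; [|split; [|split]].
have IH' := IH (fun s hs => Hall s (or_intror hs)).
case=> [<-|hin]; last exact: IH'.
apply: (step_inv Hst (IH' _ (or_introl erefl))).
exact: (Hall _ (or_introl erefl)).1.
Qed.

Lemma rt_t_neq (R : nat -> nat -> Prop) x y :
  clos_refl_trans nat R x y -> x != y -> clos_trans nat R x y.
Proof.
move=> h; case: (clos_rt_rtn1 _ _ _ _ h) => [|z w h1 h2]; first by rewrite eqxx.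
move=> _; apply: clos_rt_t (clos_rtn1_rt _ _ _ _ h2) (t_step _ _ _ _ h1).
Qed.

Theorem lemma2 (tr : list mo_state) :
  run tr ->
  (forall st, List.In st tr -> acyclic st /\ sb_consistent st) ->
  forall st, List.In st tr ->
  forall A, A \in nodes st ->
    ncv st A (ntid st A) = cv_bot A (ntid st A) (ntid st A) /\
    cv_bot A (ntid st A) (ntid st A) = A.
Proof.
move=> Hr Hall st Hin A HA.
have [_ [_ [J I]]] := run_inv Hr Hall Hin.
have [_ Hsb] := Hall _ Hin.
rewrite /cv_bot eqxx; split => //.
have HJ := J A HA.
case: (I A (ntid st A) HA) => [e|[a [b c]]].
  by move: HJ; rewrite e leqn0 => /eqP ->.
apply/eqP; rewrite eqn_leq HJ andbT leqNgt; apply/negP => hlt.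
apply: (Hsb A _ HA a (esym b) hlt).
apply: (rt_t_neq c); apply/eqP => e; by rewrite e ltnn in hlt.
Qed.
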